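(* Let $P\subset\mathbb{N}$ and let $(X_P,\sigma)$ be the spacing shift generated by $P$. If $(X_P,\sigma)$ is weakly mixing, then there exists a dense Mycielski subset $S\subset X_P$ with $\sigma(S)\subset S$ which is Banach scrambled for $\sigma$.
   Context: $\Sigma=\{0,1\}^{\mathbb{Z}_+}$ with the product topology and shift $\sigma(x)_n=x_{n+1}$. For $P\subset\mathbb{N}$, $X_P$ is the set of $x\in\Sigma$ such that whenever $x_i=x_j=1$ we have $|i-j|\in P\cup\{0\}$; it is closed and $\sigma$-invariant. A system $(X,T)$ is weakly mixing if $(X\times X,T\times T)$ is topologically transitive. A set $F\subset\mathbb{Z}_+$ has Banach density one if for every $\lambda<1$ there is $N\ge1$ with $\#(F\cap I)\ge\lambda\,\#(I)$ for every interval of integers $I\subset\mathbb{Z}_+$ with $\#(I)\ge N$. A pair $(x,y)$ is Banach proximal if for every $\varepsilon>0$ the set $\{n: d(T^nx,T^ny)<\varepsilon\}$ has Banach density one; it is asymptotic if $d(T^nx,T^ny)\to0$. A subset with at least two points is Banach scrambled if every pair of distinct points in it is Banach proximal but not asymptotic. A Mycielski set is a countable union of Cantor sets. *)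

(* Defs.v *)
From Stdlib Require Import Reals List Classical ClassicalEpsilon.
Open Scope R_scope.

(** Sigma = {0,1}^{Z_+}, coded as nat -> bool (true = 1). *)
Definition Sigma := nat -> bool.

Definition shift (x : Sigma) : Sigma := fun n => x (S n).
Definition shiftn (n : nat) (x : Sigma) : Sigma := Nat.iter n shift x.

Definition first_diff_dist (x y : Sigma) (r : R) : Prop :=
  (x = y /\ r = 0) \/
  (exists k : nat, (forall i, (i < k)%nat -> x i = y i) /\ x k <> y k /\ r = / 2 ^ k).
Definition d (x y : Sigma) : R := epsilon (inhabits 0) (first_diff_dist x y).

(** Spacing shift X_P: whenever x_i = x_j = 1, |i-j| in P ∪ {0}. *)
Definition X_P (P : nat -> Prop) (x : Sigma) : Prop :=
  forall i j : nat, x i = true -> x j = true ->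
    (i = j \/ P ((i - j) + (j - i))%nat).

Definition open_in (A U : Sigma -> Prop) : Prop :=
  (forall x, U x -> A x) /\
  forall x, U x -> exists eps, eps > 0 /\
    forall y, A y -> d x y < eps -> U y.

Definition open_in2 (A : Sigma -> Prop) (U : Sigma -> Sigma -> Prop) : Prop :=
  (forall x y, U x y -> A x /\ A y) /\
  forall x y, U x y -> exists eps, eps > 0 /\
    forall x' y', A x' -> A y' -> d x x' < eps -> d y y' < eps -> U x' y'.

(** (A x A, sigma x sigma) is topologically transitive:
    for nonempty open U, V there is n in Z_+ with U ∩ (sigma x sigma)^{-n} V ≠ ∅. *)
Definition weakly_mixing (A : Sigma -> Prop) : Prop :=
  forall U V : Sigma -> Sigma -> Prop,
    open_in2 A U -> open_in2 A V ->
    (exists x y, U x y) -> (exists x y, V x y) ->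
    exists (n : nat) x y, U x y /\ V (shiftn n x) (shiftn n y).

Definition continuous_on (C : Sigma -> Prop) (f : Sigma -> Sigma) : Prop :=
  forall x, C x -> forall eps, eps > 0 -> exists delta, delta > 0 /\
    forall y, C y -> d x y < delta -> d (f x) (f y) < eps.

(** Cantor set: a subset homeomorphic to the Cantor space {0,1}^N. *)
Definition Cantor_set (C : Sigma -> Prop) : Prop :=
  exists f g : Sigma -> Sigma,
    continuous_on (fun _ => True) f /\
    (forall x, C x <-> exists z, x = f z) /\
    (forall z, g (f z) = z) /\
    continuous_on C g.

Definition Mycielski (S : Sigma -> Prop) : Prop :=
  exists Cs : nat -> (Sigma -> Prop),
    (forall k, Cantor_set (Cs k)) /\ (forall x, S x <-> exists k, Cs k x).

Definition dense_in (A S : Sigma -> Prop) : Prop :=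
  (forall x, S x -> A x) /\
  forall x, A x -> forall eps, eps > 0 -> exists s, S s /\ d x s < eps.

Definition count_in (F : nat -> Prop) (a L : nat) : nat :=
  length (filter (fun n => if excluded_middle_informative (F n) then true else false)
                 (seq a L)).

Definition banach_density_one (F : nat -> Prop) : Prop :=
  forall lam : R, lam < 1 -> exists N : nat, (1 <= N)%nat /\
    forall a L : nat, (N <= L)%nat -> INR (count_in F a L) >= lam * INR L.

Definition banach_proximal (x y : Sigma) : Prop :=
  forall eps, eps > 0 -> banach_density_one (fun n => d (shiftn n x) (shiftn n y) < eps).

Definition asymptotic (x y : Sigma) : Prop :=
  forall eps, eps > 0 -> exists N : nat, forall n, (N <= n)%nat ->
    d (shiftn n x) (shiftn n y) < eps.

Definition banach_scrambled (S : Sigma -> Prop) : Prop :=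
  (exists x y, S x /\ S y /\ x <> y) /\
  forall x y, S x -> S y -> x <> y -> banach_proximal x y /\ ~ asymptotic x y.

(* Main.v *)
Require Import Defs.
From Stdlib Require Import Reals Lra Lia List Classical ClassicalEpsilon FunctionalExtensionality.
From Stdlib Require Cantor.
Import ListNotations.
Open Scope R_scope.

Lemma least_diff (x y : Sigma) : forall n, x n <> y n ->
  exists k, (forall i, (i < k)%nat -> x i = y i) /\ x k <> y k.
Proof.
  intro n; induction n as [n IH] using (well_founded_induction Wf_nat.lt_wf); intro Hn.
  destruct (classic (forall i, (i < n)%nat -> x i = y i)) as [H|H].
  - exists n; auto.
  - apply not_all_ex_not in H as [i Hi].
    apply imply_to_and in Hi as [Hi1 Hi2]. eauto.
Qed.

Lemma d_exists x y : exists r, first_diff_dist x y r.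
Proof.
  destruct (classic (x = y)) as [H|H].
  - exists 0; left; auto.
  - assert (exists n, x n <> y n) as [n Hn].
    { apply not_all_ex_not; intro H'; apply H; apply functional_extensionality; auto. }
    destruct (least_diff x y n Hn) as [k [Hk1 Hk2]].
    exists (/ 2 ^ k); right; exists k; auto.
Qed.

Lemma d_spec x y : first_diff_dist x y (d x y).
Proof. unfold d. apply epsilon_spec. apply d_exists. Qed.

Lemma pow2_pos k : 0 < 2 ^ k.
Proof. apply pow_lt; lra. Qed.

Lemma inv_pow_lt K k : (K < k)%nat -> / 2 ^ k < / 2 ^ K.
Proof.
  intro H. apply Rinv_lt_contravar.
  - apply Rmult_lt_0_compat; apply pow2_pos.
  - apply Rlt_pow; [lra | exact H].
Qed.

Lemma inv_pow_le K k : (k <= K)%nat -> / 2 ^ K <= / 2 ^ k.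
Proof.
  intro H. apply Rinv_le_contravar. apply pow2_pos.
  apply Rle_pow; [lra | exact H].
Qed.

Lemma d_agree K x y : (forall i, (i <= K)%nat -> x i = y i) -> d x y < / 2 ^ K.
Proof.
  intro H. destruct (d_spec x y) as [[_ E]|[k [Hk1 [Hk2 E]]]]; rewrite E.
  - apply Rinv_0_lt_compat, pow2_pos.
  - apply inv_pow_lt. destruct (Nat.lt_ge_cases K k) as [h|h]; auto.
    exfalso; apply Hk2; apply H; auto.
Qed.

Lemma d_close K x y : d x y < / 2 ^ K -> forall i, (i <= K)%nat -> x i = y i.
Proof.
  intros H i Hi. destruct (d_spec x y) as [[E _]|[k [Hk1 [Hk2 E]]]].
  - subst; auto.
  - destruct (Nat.lt_ge_cases i k) as [h|h]; auto.
    exfalso. rewrite E in H. pose proof (inv_pow_le K k ltac:(lia)). lra.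
Qed.

Lemma INR_lt_pow n : INR n < 2 ^ n.
Proof.
  induction n. simpl; lra.
  rewrite S_INR. simpl. pose proof (pow2_pos n).
  assert (1 <= 2 ^ n) by (clear; induction n; simpl; lra). lra.
Qed.

Lemma small_pow eps : eps > 0 -> exists K, / 2 ^ K < eps.
Proof.
  intro He. destruct (INR_archimed eps 1 He) as [n Hn].
  exists n. pose proof (INR_lt_pow n). pose proof (pow2_pos n).
  apply (Rmult_lt_reg_l (2 ^ n)); auto. rewrite Rinv_r by lra. nra.
Qed.

Lemma cont_of_dep (C : Sigma -> Prop) (f : Sigma -> Sigma) :
  (forall m, exists m', forall u v, (forall i, (i <= m')%nat -> u i = v i) ->
     forall i, (i <= m)%nat -> f u i = f v i) -> continuous_on C f.
Proof.
  intros H x _ eps He. destruct (small_pow eps He) as [m Hm].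
  destruct (H m) as [m' Hm']. exists (/ 2 ^ m'). split.
  - apply Rlt_gt, Rinv_0_lt_compat, pow2_pos.
  - intros y _ Hy. eapply Rlt_trans; [|exact Hm]. apply d_agree.
    apply Hm'. apply d_close; auto.
Qed.

Lemma shiftn_spec n x i : shiftn n x i = x (n + i)%nat.
Proof.
  revert i; induction n; intro i; simpl; auto.
  change (shiftn n x (S i) = x (S (n + i))). rewrite IHn. f_equal; lia.
Qed.

Lemma shiftn_S n x : shiftn (S n) x = shift (shiftn n x).
Proof. reflexivity. Qed.

Definition dec (Q : Prop) : bool := if excluded_middle_informative Q then true else false.

Lemma dec_true Q : dec Q = true <-> Q.
Proof. unfold dec; destruct excluded_middle_informative; split; congruence. Qed.

Lemma count_add F a L1 L2 : count_in F a (L1 + L2) = (count_in F a L1 + count_in F (a + L1) L2)%nat.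
Proof. unfold count_in. rewrite seq_app, filter_app, length_app. reflexivity. Qed.

Lemma count_le_list F a L l : (forall n, (a <= n < a + L)%nat -> F n -> In n l) ->
  (count_in F a L <= length l)%nat.
Proof.
  intro H. unfold count_in. apply NoDup_incl_length.
  - apply NoDup_filter, seq_NoDup.
  - intros n Hn. apply filter_In in Hn as [H1 H2]. apply in_seq in H1.
    destruct excluded_middle_informative; [|discriminate]. apply H; auto.
Qed.

Lemma count_compl F a L : (count_in F a L + count_in (fun n => ~ F n) a L)%nat = L.
Proof.
  unfold count_in. rewrite <- (length_seq L a) at 3. generalize (seq a L).
  induction l as [|n l IH]; simpl; auto.
  destruct (excluded_middle_informative (F n)); destruct (excluded_middle_informative (~ F n));
    simpl; try tauto; lia.
Qed.

Lemma bd_of_blocks E c :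
  (forall M, (1 <= M)%nat -> exists N0, forall a, (N0 <= a)%nat -> (M <= count_in E a M + c)%nat) ->
  banach_density_one E.
Proof.
  intros H lam Hlam.
  destruct (Rle_lt_dec lam 0) as [Hl|Hl].
  { exists 1%nat; split; auto. intros a L _. pose proof (pos_INR (count_in E a L)).
    pose proof (pos_INR L). nra. }
  destruct (INR_archimed ((1 - lam)/2) (INR c) ltac:(lra)) as [M0 HM0].
  set (M := S M0).
  assert (HcM : INR c < INR M * ((1 - lam)/2)).
  { unfold M; rewrite S_INR. nra. }
  destruct (H M ltac:(unfold M; lia)) as [N0 HN0].
  assert (Hblk : forall q b, (N0 <= b)%nat -> (q * M <= count_in E b (q * M) + q * c)%nat).
  { induction q; intros b Hb; [simpl; lia|].
    rewrite Nat.mul_succ_l, count_add.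
    specialize (IHq b Hb). specialize (HN0 (b + q * M)%nat ltac:(lia)). lia. }
  destruct (INR_archimed (1 - lam) (4 * (INR N0 + INR M)) ltac:(lra)) as [N1 HN1].
  exists (N1 + N0 + 1)%nat. split; [lia|].
  intros a L HL.
  assert (HMpos : (M <> 0)%nat) by (unfold M; lia).
  set (q := ((L - N0) / M)%nat). set (r := ((L - N0) mod M)%nat).
  assert (Hdm : (L - N0 = M * q + r)%nat) by (apply Nat.div_mod; auto).
  assert (Hr : (r < M)%nat) by (apply Nat.mod_upper_bound; auto).
  assert (HLsplit : L = (N0 + (q * M + r))%nat) by lia.
  set (C := count_in E (a + N0) (q * M)).
  assert (HC : (C <= count_in E a L)%nat).
  { unfold C. clearbody q r. subst L. rewrite count_add, count_add. lia. }
  assert (HqC : (q * M <= C + q * c)%nat) by (apply Hblk; lia).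
  apply le_INR in HC. apply le_INR in HqC.
  rewrite plus_INR, !mult_INR in HqC.
  assert (HLr : INR L = INR N0 + INR q * INR M + INR r) by (rewrite HLsplit, !plus_INR, mult_INR; ring).
  apply lt_INR in Hr.
  assert (HN1L : INR N1 <= INR L) by (apply le_INR; lia).
  assert (h1 : INR L * (1 - lam) > 4 * (INR N0 + INR M)).
  { assert (INR N1 * (1 - lam) <= INR L * (1 - lam)) by (apply Rmult_le_compat_r; lra). lra. }
  assert (h2 : INR q * INR c <= INR q * (INR M * ((1 - lam) / 2))).
  { apply Rmult_le_compat_l; [apply pos_INR|lra]. }
  pose proof (pos_INR N0). pose proof (pos_INR r). pose proof (pos_INR q). pose proof (pos_INR M).
  assert (h3 : lam * INR N0 <= INR N0) by nra.
  assert (h4 : lam * INR r <= INR r) by nra.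
  assert (h5 : 0 <= lam * INR N0) by nra.
  assert (h6 : 0 <= lam * INR r) by nra.
  rewrite HLr in h1 |- *. nra.
Qed.

Definition sparse (x : Sigma) := forall M, exists N0, forall s s', x s = true -> x s' = true ->
  (N0 <= s)%nat -> (s < s')%nat -> (M <= s' - s)%nat.

Lemma window_unique (x : Sigma) G N0 a :
  (forall s s', x s = true -> x s' = true -> (N0 <= s)%nat -> (s < s')%nat -> (G <= s' - s)%nat) ->
  (N0 <= a)%nat -> exists s0, forall s, (a <= s < a + G)%nat -> x s = true -> s = s0.
Proof.
  intros H Ha. destruct (classic (exists s, (a <= s < a + G)%nat /\ x s = true)) as [[s0 [H1 H2]]|Hn].
  - exists s0. intros s Hs Hxs. destruct (Nat.lt_trichotomy s s0) as [h|[h|h]]; auto.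
    + specialize (H s s0 Hxs H2 ltac:(lia) h). lia.
    + specialize (H s0 s H2 Hxs ltac:(lia) h). lia.
  - exists 0%nat. intros s Hs Hxs. exfalso; eauto.
Qed.

Lemma proximal_of_sparse x y : sparse x -> sparse y -> banach_proximal x y.
Proof.
  intros Hx Hy eps He. destruct (small_pow eps He) as [K HK].
  apply (bd_of_blocks _ (2 * (K + 1))).
  intros M HM.
  destruct (Hx (M + K + 1)%nat) as [Nx HNx]. destruct (Hy (M + K + 1)%nat) as [Ny HNy].
  exists (Nx + Ny)%nat. intros a Ha.
  destruct (window_unique x _ _ a HNx ltac:(lia)) as [sx Hsx].
  destruct (window_unique y _ _ a HNy ltac:(lia)) as [sy Hsy].
  pose proof (count_compl (fun n => d (shiftn n x) (shiftn n y) < eps) a M) as Hc.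
  assert (Hb : (count_in (fun n => ~ (d (shiftn n x) (shiftn n y) < eps)%R) a M <=
                length (seq (sx - K) (K + 1) ++ seq (sy - K) (K + 1)))%nat).
  { apply count_le_list. intros n Hn Hbad.
    assert (exists i, (i <= K)%nat /\ x (n + i)%nat <> y (n + i)%nat) as [i [Hi Hxy]].
    { apply NNPP; intro Hno. apply Hbad. eapply Rlt_trans; [|exact HK].
      apply d_agree. intros i Hi. rewrite !shiftn_spec.
      destruct (Bool.bool_dec (x (n + i)%nat) (y (n + i)%nat)); auto.
      exfalso; apply Hno; eauto. }
    apply in_or_app.
    destruct (x (n + i)%nat) eqn:E1.
    - left. specialize (Hsx (n + i)%nat ltac:(lia) E1). apply in_seq. lia.
    - destruct (y (n + i)%nat) eqn:E2; [|congruence].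
      right. specialize (Hsy (n + i)%nat ltac:(lia) E2). apply in_seq. lia. }
  rewrite length_app, !length_seq in Hb. lia.
Qed.

Definition GoodSet (P : nat -> Prop) (G : nat -> Prop) :=
  forall u v, G u -> G v -> u = v \/ P ((u - v) + (v - u))%nat.

Lemma shift_XP P n x : X_P P x -> X_P P (shiftn n x).
Proof.
  intros H i j Hi Hj. rewrite shiftn_spec in Hi, Hj.
  destruct (H _ _ Hi Hj) as [E|E]; [left; lia|right].
  replace ((i - j) + (j - i))%nat with ((n + i - (n + j)) + (n + j - (n + i)))%nat by lia. exact E.
Qed.

Lemma pick_exists P : weakly_mixing (X_P P) -> forall E M,
  GoodSet P (fun u => In u E) -> (forall e, In e E -> (e < M)%nat) ->
  exists p, (M <= p)%nat /\ forall e, In e E -> P (p - e)%nat.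
Proof.
  intros Hwm E M HE HM.
  set (U := fun x y => X_P P x /\ X_P P y /\ forall e, In e E -> x e = true).
  set (V := fun x y => X_P P x /\ X_P P y /\ x M = true).
  assert (HU : open_in2 (X_P P) U).
  { split. { intros x y [h1 [h2 _]]; auto. }
    intros x y [h1 [h2 h3]]. exists (/ 2 ^ M). split.
    { apply Rlt_gt, Rinv_0_lt_compat, pow2_pos. }
    intros x' y' hx hy hd _. repeat split; auto. intros e He.
    rewrite <- (d_close M x x' hd e ltac:(specialize (HM e He); lia)). auto. }
  assert (HV : open_in2 (X_P P) V).
  { split. { intros x y [h1 [h2 _]]; auto. }
    intros x y [h1 [h2 h3]]. exists (/ 2 ^ M). split.
    { apply Rlt_gt, Rinv_0_lt_compat, pow2_pos. }
    intros x' y' hx hy hd _. repeat split; auto.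
    rewrite <- (d_close M x x' hd M ltac:(lia)). auto. }
  set (chi := fun u => dec (In u E)).
  assert (Hchi : X_P P chi).
  { intros i j Hi Hj. unfold chi in Hi, Hj. apply (proj1 (dec_true _)) in Hi. apply (proj1 (dec_true _)) in Hj. apply HE; auto. }
  set (em := fun u => Nat.eqb u M).
  assert (Hem : X_P P em).
  { intros i j Hi Hj. unfold em in Hi, Hj. apply Nat.eqb_eq in Hi. apply Nat.eqb_eq in Hj. left; lia. }
  assert (HU1 : exists x y, U x y).
  { exists chi, chi. repeat split; auto. intros e He. apply dec_true; auto. }
  assert (HV1 : exists x y, V x y).
  { exists em, em. repeat split; auto. apply Nat.eqb_refl. }
  destruct (Hwm U V HU HV HU1 HV1) as [n [x [y [[h1 [h2 h3]] [h4 [h5 h6]]]]]].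
  exists (n + M)%nat. split; [lia|]. intros e He.
  rewrite shiftn_spec in h6.
  specialize (HM e He). destruct (h1 _ _ h6 (h3 e He)) as [Eq|Hp]; [lia|].
  replace (n + M - e)%nat with ((n + M - e) + (e - (n + M)))%nat by lia. exact Hp.
Qed.

Definition PickSpec (P : nat -> Prop) (pick : list nat -> nat -> nat) :=
  forall E M, GoodSet P (fun u => In u E) -> (forall e, In e E -> (e < M)%nat) ->
  (M <= pick E M)%nat /\ forall e, In e E -> P (pick E M - e)%nat.

Lemma pick_fun P : weakly_mixing (X_P P) -> exists pick, PickSpec P pick.
Proof.
  intro Hwm.
  assert (H : forall E M, exists p, GoodSet P (fun u => In u E) -> (forall e, In e E -> (e < M)%nat) ->
     (M <= p)%nat /\ forall e, In e E -> P (p - e)%nat).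
  { intros E M. destruct (classic (GoodSet P (fun u => In u E) /\ (forall e, In e E -> (e < M)%nat)))
      as [[h1 h2]|h].
    - destruct (pick_exists P Hwm E M h1 h2) as [p Hp]. exists p; auto.
    - exists 0%nat. intros h1 h2; exfalso; auto. }
  exists (fun E M => proj1_sig (constructive_indefinite_description _ (H E M))).
  intros E M h1 h2. destruct (constructive_indefinite_description _ (H E M)) as [p Hp]; simpl; auto.
Qed.

Fixpoint bitc (c u : nat) : bool :=
  match u with 0%nat => Nat.odd c | S u' => bitc (Nat.div2 c) u' end.

Lemma bit_exists m : forall (x : nat -> bool), exists c, forall u, (u < m)%nat -> bitc c u = x u.
Proof.
  induction m; intro x.
  - exists 0%nat; intros; lia.
  - destruct (IHm (fun u => x (S u))) as [c' Hc'].
    exists (if x 0%nat then S (2 * c') else (2 * c')%nat).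
    intros [|u] Hu; cbn [bitc].
    + destruct (x 0%nat); [rewrite Nat.odd_succ, Nat.even_mul|rewrite Nat.odd_mul]; reflexivity.
    + destruct (x 0%nat); [rewrite Nat.div2_succ_double|rewrite Nat.div2_double]; apply Hc'; lia.
Qed.

Definition mk k := fst (Cantor.of_nat k).
Definition ck k := snd (Cantor.of_nat k).
Definition Fraw k u := (u < mk k)%nat /\ bitc (ck k) u = true.
Definition Fg P k u := GoodSet P (Fraw k) /\ Fraw k u.
Definition Flist P k := filter (fun u => dec (Fg P k u)) (seq 0 (mk k)).
Definition cls i := fst (Cantor.of_nat i).
Definition Elist P i (h : list nat) := Flist P (cls i) ++
  map (fun j => nth j h 0%nat) (filter (fun j => Nat.eqb (cls j) (cls i)) (seq 0 i)).
Definition bnd i h := (mk (cls i) + 2 * last h 0 + 1 + i)%nat.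
Fixpoint hist P (pick : list nat -> nat -> nat) i : list nat :=
  match i with
  | 0%nat => []
  | S i' => hist P pick i' ++ [pick (Elist P i' (hist P pick i')) (bnd i' (hist P pick i'))]
  end.
Definition aa P pick i := pick (Elist P i (hist P pick i)) (bnd i (hist P pick i)).

Lemma hist_S P pick i : hist P pick (S i) = hist P pick i ++ [aa P pick i].
Proof. reflexivity. Qed.

Lemma hist_len P pick i : length (hist P pick i) = i.
Proof. induction i; simpl; auto. rewrite length_app, IHi; simpl; lia. Qed.

Lemma hist_nth P pick i j : (j < i)%nat -> nth j (hist P pick i) 0%nat = aa P pick j.
Proof.
  induction i; intro H; [lia|]. rewrite hist_S.
  destruct (Nat.lt_ge_cases j i) as [h|h].
  - rewrite app_nth1 by (rewrite hist_len; auto). auto.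
  - rewrite app_nth2 by (rewrite hist_len; auto). rewrite hist_len.
    replace (j - i)%nat with 0%nat by lia. simpl. f_equal; lia.
Qed.

Lemma hist_last P pick i : last (hist P pick (S i)) 0%nat = aa P pick i.
Proof. rewrite hist_S. apply last_last. Qed.

Lemma Fg_lt P k u : Fg P k u -> (u < mk k)%nat.
Proof. intros [_ [h _]]; auto. Qed.

Lemma In_Flist P k u : In u (Flist P k) <-> Fg P k u.
Proof.
  unfold Flist. rewrite filter_In, in_seq, dec_true. split; [tauto|].
  intro H. pose proof (Fg_lt _ _ _ H). split; auto; lia.
Qed.

Lemma In_Elist P pick i u : In u (Elist P i (hist P pick i)) <->
  Fg P (cls i) u \/ exists j, (j < i)%nat /\ cls j = cls i /\ u = aa P pick j.
Proof.
  unfold Elist. rewrite in_app_iff, In_Flist, in_map_iff. split.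
  - intros [h|[j [h1 h2]]]; [left; auto|right].
    apply filter_In in h2 as [h2 h3]. apply in_seq in h2. apply Nat.eqb_eq in h3.
    exists j; repeat split; auto; try lia. rewrite <- h1. apply hist_nth; lia.
  - intros [h|[j [h1 [h2 h3]]]]; [left; auto|right].
    exists j. split. { rewrite hist_nth; auto. }
    apply filter_In. split; [apply in_seq; lia|apply Nat.eqb_eq; auto].
Qed.

Lemma aa_props P pick (Hp : PickSpec P pick) : forall i,
  (forall k, GoodSet P (fun u => Fg P k u \/ exists j, (j < i)%nat /\ cls j = k /\ u = aa P pick j)) /\
  (forall j, (j < i)%nat -> (mk (cls j) <= aa P pick j)%nat /\ (j <= aa P pick j)%nat /\
      forall j', (j' < j)%nat -> (2 * aa P pick j' < aa P pick j)%nat).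
Proof.
  induction i.
  - split.
    + intros k u v [[h1 h2]|[j [hj _]]] [[h3 h4]|[j' [hj' _]]]; try lia. apply h1; auto.
    + intros; lia.
  - destruct IHi as [G Mono].
    assert (F1 : forall j, (j < i)%nat -> (2 * aa P pick j < bnd i (hist P pick i))%nat).
    { intros j Hj. destruct i as [|i']; [lia|]. unfold bnd. rewrite hist_last.
      destruct (Nat.eq_dec j i') as [->|hne]; [lia|].
      destruct (Mono i' ltac:(lia)) as [_ [_ h]]. specialize (h j ltac:(lia)). lia. }
    assert (HE : GoodSet P (fun u => In u (Elist P i (hist P pick i)))).
    { intros u v hu hv. apply In_Elist in hu, hv. apply (G (cls i)); auto. }
    assert (HB : forall e, In e (Elist P i (hist P pick i)) -> (e < bnd i (hist P pick i))%nat).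
    { intros e He. apply In_Elist in He as [h|[j [h1 [h2 h3]]]].
      - apply Fg_lt in h. unfold bnd. lia.
      - subst e. specialize (F1 j h1). lia. }
    destruct (Hp _ _ HE HB) as [Hge HP]. fold (aa P pick i) in Hge, HP.
    split.
    + intros k u v hu hv.
      assert (Hcase : forall w, (Fg P k w \/ exists j, (j < S i)%nat /\ cls j = k /\ w = aa P pick j) ->
         (Fg P k w \/ exists j, (j < i)%nat /\ cls j = k /\ w = aa P pick j) \/ (w = aa P pick i /\ cls i = k)).
      { intros w [h|[j [h1 [h2 h3]]]]; [left; left; auto|].
        destruct (Nat.eq_dec j i) as [->|hne]; [right; auto|left; right; exists j; split; auto; lia]. }
      apply Hcase in hu, hv.
      destruct hu as [hu|[hu hk]]; destruct hv as [hv|[hv hk']].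
      * apply (G k); auto.
      * subst k v. assert (In u (Elist P i (hist P pick i))) as Hu by (apply In_Elist; auto).
        right. specialize (HB u Hu). specialize (HP u Hu).
        replace ((u - aa P pick i) + (aa P pick i - u))%nat with (aa P pick i - u)%nat by lia. auto.
      * subst k u. assert (In v (Elist P i (hist P pick i))) as Hv by (apply In_Elist; auto).
        right. specialize (HB v Hv). specialize (HP v Hv).
        replace ((aa P pick i - v) + (v - aa P pick i))%nat with (aa P pick i - v)%nat by lia. auto.
      * left; congruence.
    + intros j Hj. destruct (Nat.eq_dec j i) as [->|hne]; [|apply Mono; lia].
      unfold bnd in Hge. repeat split; try lia.
      intros j' Hj'. specialize (F1 j' Hj'). unfold bnd in F1. lia.
Qed.

Lemma aa_good P pick (Hp : PickSpec P pick) k :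
  GoodSet P (fun u => Fg P k u \/ exists j, cls j = k /\ u = aa P pick j).
Proof.
  intros u v hu hv.
  destruct hu as [hu|[j1 [h1 h2]]]; destruct hv as [hv|[j2 [h3 h4]]].
  - destruct (aa_props P pick Hp 0) as [G _]. apply (G k); left; auto.
  - destruct (aa_props P pick Hp (S j2)) as [G _]. apply (G k); [left; auto|right; exists j2; auto].
  - destruct (aa_props P pick Hp (S j1)) as [G _]. apply (G k); [right; exists j1; auto|left; auto].
  - destruct (aa_props P pick Hp (S (j1 + j2))) as [G _].
    apply (G k); right; [exists j1|exists j2]; repeat split; auto; lia.
Qed.

Lemma aa_mk P pick (Hp : PickSpec P pick) j : (mk (cls j) <= aa P pick j)%nat.
Proof. destruct (aa_props P pick Hp (S j)) as [_ M]. apply M; lia. Qed.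
Lemma aa_ge P pick (Hp : PickSpec P pick) j : (j <= aa P pick j)%nat.
Proof. destruct (aa_props P pick Hp (S j)) as [_ M]. apply M; lia. Qed.
Lemma aa_super P pick (Hp : PickSpec P pick) j' j : (j' < j)%nat -> (2 * aa P pick j' < aa P pick j)%nat.
Proof. intro H. destruct (aa_props P pick Hp (S j)) as [_ M]. apply M; lia. Qed.

Lemma aa_lt_rev P pick (Hp : PickSpec P pick) i j : (aa P pick i < aa P pick j)%nat -> (i < j)%nat.
Proof.
  intro H. destruct (Nat.lt_ge_cases i j) as [h|h]; auto.
  destruct (Nat.eq_dec i j) as [->|hne]; [lia|].
  pose proof (aa_super P pick Hp j i ltac:(lia)). lia.
Qed.

Lemma aa_inj P pick (Hp : PickSpec P pick) i j : aa P pick i = aa P pick j -> i = j.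
Proof.
  intro H. destruct (Nat.lt_trichotomy i j) as [h|[h|h]]; auto.
  - pose proof (aa_super P pick Hp i j h). lia.
  - pose proof (aa_super P pick Hp j i h). lia.
Qed.

Lemma sidon P pick (Hp : PickSpec P pick) i j i' j' :
  (j < i)%nat -> (j' < i')%nat ->
  (aa P pick i - aa P pick j = aa P pick i' - aa P pick j')%nat -> i = i' /\ j = j'.
Proof.
  intros h1 h2 E.
  pose proof (aa_super P pick Hp _ _ h1). pose proof (aa_super P pick Hp _ _ h2).
  destruct (Nat.lt_trichotomy i i') as [h|[h|h]].
  - pose proof (aa_super P pick Hp _ _ h). lia.
  - subst i'. split; auto. apply (aa_inj P pick Hp). lia.
  - pose proof (aa_super P pick Hp _ _ h). lia.
Qed.

Definition bb P pick k t := aa P pick (Cantor.to_nat (k, t)).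
Definition jj t := fst (Cantor.of_nat t).
Definition Mem P pick k (z : Sigma) p :=
  Fg P k p \/ (exists t, p = bb P pick k (2 * t)) \/
  (exists t, p = bb P pick k (2 * t + 1) /\ z (jj t) = true).
Definition fk P pick k (z : Sigma) : Sigma := fun p => dec (Mem P pick k z p).

Lemma cls_to k t : cls (Cantor.to_nat (k, t)) = k.
Proof. unfold cls. rewrite Cantor.cancel_of_to. reflexivity. Qed.

Lemma bb_mk P pick (Hp : PickSpec P pick) k t : (mk k <= bb P pick k t)%nat.
Proof. unfold bb. pose proof (aa_mk P pick Hp (Cantor.to_nat (k, t))). rewrite cls_to in H. auto. Qed.

Lemma bb_ge P pick (Hp : PickSpec P pick) k t : (t + k <= bb P pick k t)%nat.
Proof. unfold bb. pose proof (aa_ge P pick Hp (Cantor.to_nat (k, t))).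
  pose proof (Cantor.to_nat_non_decreasing k t). lia. Qed.

Lemma bb_inj P pick (Hp : PickSpec P pick) k t t' : bb P pick k t = bb P pick k t' -> t = t'.
Proof. unfold bb. intro H. apply (aa_inj P pick Hp) in H. apply Cantor.to_nat_inj in H. congruence. Qed.

Lemma jj_le t : (jj t <= t)%nat.
Proof. unfold jj. pose proof (Cantor.to_nat_non_decreasing (fst (Cantor.of_nat t)) (snd (Cantor.of_nat t))).
  rewrite <- surjective_pairing, Cantor.cancel_to_of in H. lia. Qed.

Lemma jj_to j n : jj (Cantor.to_nat (j, n)) = j.
Proof. unfold jj. rewrite Cantor.cancel_of_to. reflexivity. Qed.

Lemma fk_XP P pick (Hp : PickSpec P pick) k z : X_P P (fk P pick k z).
Proof.
  intros i j Hi Hj. unfold fk in Hi, Hj. apply (proj1 (dec_true _)) in Hi. apply (proj1 (dec_true _)) in Hj.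
  apply (aa_good P pick Hp k).
  - destruct Hi as [h|[[t ->]|[t [-> _]]]]; [left; auto|right; eexists; split; [apply cls_to|reflexivity]..].
  - destruct Hj as [h|[[t ->]|[t [-> _]]]]; [left; auto|right; eexists; split; [apply cls_to|reflexivity]..].
Qed.

Lemma fk_inv P pick k z p : fk P pick k z p = true ->
  Fg P k p \/ exists i, cls i = k /\ p = aa P pick i.
Proof.
  intro Hi. unfold fk in Hi. apply (proj1 (dec_true _)) in Hi.
  destruct Hi as [h|[[t ->]|[t [-> _]]]]; [left; auto|right; eexists; split; [apply cls_to|reflexivity]..].
Qed.

Lemma fk_even P pick k z t : fk P pick k z (bb P pick k (2 * t)) = true.
Proof. unfold fk. apply dec_true. right; left; eauto. Qed.

Lemma fk_odd P pick (Hp : PickSpec P pick) k z t : fk P pick k z (bb P pick k (2 * t + 1)) = z (jj t).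
Proof.
  unfold fk. destruct (z (jj t)) eqn:E.
  - apply dec_true. right; right; eauto.
  - unfold dec. destruct excluded_middle_informative as [h|h]; auto. exfalso.
    destruct h as [h|[[t' h]|[t' [h1 h2]]]].
    + apply Fg_lt in h. pose proof (bb_mk P pick Hp k (2 * t + 1)). lia.
    + apply (bb_inj P pick Hp) in h. lia.
    + apply (bb_inj P pick Hp) in h1. assert (t = t') by lia. subst. congruence.
Qed.

Lemma fk_dep P pick (Hp : PickSpec P pick) k z z' p :
  (forall i, (i <= p)%nat -> z i = z' i) -> fk P pick k z p = fk P pick k z' p.
Proof.
  intro H. unfold fk, dec.
  assert (Mem P pick k z p <-> Mem P pick k z' p).
  { unfold Mem. split; intros [h|[h|[t [h1 h2]]]]; auto; right; right; exists t; split; auto.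
    all: pose proof (bb_ge P pick Hp k (2 * t + 1)); pose proof (jj_le t).
    - rewrite <- H; auto; lia.
    - rewrite H; auto; lia. }
  destruct excluded_middle_informative; destruct excluded_middle_informative; tauto.
Qed.

Lemma fk_low P pick (Hp : PickSpec P pick) k z p : (p < mk k)%nat ->
  (fk P pick k z p = true <-> Fg P k p).
Proof.
  intro H. unfold fk. rewrite dec_true. unfold Mem. split; [|auto].
  intros [h|[[t ->]|[t [-> _]]]]; auto; exfalso.
  - pose proof (bb_mk P pick Hp k (2 * t)). lia.
  - pose proof (bb_mk P pick Hp k (2 * t + 1)). lia.
Qed.

Lemma sparse_fk P pick (Hp : PickSpec P pick) k z n : sparse (shiftn n (fk P pick k z)).
Proof.
  intro M. exists (M + mk k)%nat. intros s s' h1 h2 h3 h4.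
  rewrite shiftn_spec in h1, h2.
  apply fk_inv in h1 as [h1|[i [hi1 hi2]]]; [apply Fg_lt in h1; lia|].
  apply fk_inv in h2 as [h2|[i' [hi1' hi2']]]; [apply Fg_lt in h2; lia|].
  assert (i < i')%nat by (apply (aa_lt_rev P pick Hp); lia).
  pose proof (aa_super P pick Hp _ _ H). lia.
Qed.

Local Open Scope nat_scope.

Lemma bounded_init (h : nat -> nat) m : exists B, forall i, (i <= m)%nat -> (h i <= B)%nat.
Proof.
  induction m.
  - exists (h 0%nat). intros i Hi. replace i with 0%nat by lia. lia.
  - destruct IHm as [B HB]. exists (Nat.max B (h (S m))). intros i Hi.
    destruct (Nat.eq_dec i (S m)) as [->|hne]; [lia|]. specialize (HB i ltac:(lia)). lia.
Qed.

Lemma shift_match P pick (Hp : PickSpec P pick) n n' i1 i2 i1' i2' :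
  i1 <> i2 -> (n <= aa P pick i1)%nat -> (n <= aa P pick i2)%nat ->
  (aa P pick i1 - n + n' = aa P pick i1')%nat -> (aa P pick i2 - n + n' = aa P pick i2')%nat ->
  i1 = i1' /\ n = n'.
Proof.
  intros hne h1 h2 e1 e2.
  assert (aa P pick i1 <> aa P pick i2) by (intro E; apply hne; apply (aa_inj P pick Hp); auto).
  destruct (Nat.lt_gt_cases (aa P pick i1) (aa P pick i2)) as [[h|h] _]; [auto| |].
  - assert (i1 < i2)%nat by (apply (aa_lt_rev P pick Hp); auto).
    assert (i1' < i2')%nat by (apply (aa_lt_rev P pick Hp); lia).
    pose proof (sidon P pick Hp i2 i1 i2' i1' H0 H1 ltac:(lia)) as [_ E]. subst i1'. split; auto; lia.
  - assert (i2 < i1)%nat by (apply (aa_lt_rev P pick Hp); auto).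
    assert (i2' < i1')%nat by (apply (aa_lt_rev P pick Hp); lia).
    pose proof (sidon P pick Hp i1 i2 i1' i2' H0 H1 ltac:(lia)) as [E _]. subst i1'. split; auto; lia.
Qed.

Lemma not_asym P pick (Hp : PickSpec P pick) k n z k' n' z' :
  shiftn n (fk P pick k z) <> shiftn n' (fk P pick k' z') ->
  ~ asymptotic (shiftn n (fk P pick k z)) (shiftn n' (fk P pick k' z')).
Proof.
  intros Hne Has. destruct (Has 1%R ltac:(lra)) as [N HN].
  assert (Hag : forall q, (N <= q)%nat -> fk P pick k z (n + q)%nat = fk P pick k' z' (n' + q)%nat).
  { intros q Hq. specialize (HN q Hq). replace 1%R with (/ 2 ^ 0)%R in HN by (simpl; apply Rinv_1).
    pose proof (d_close 0 _ _ HN 0%nat (le_n _)) as E. rewrite !shiftn_spec, Nat.add_0_r in E. exact E. }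
  set (T := (N + n + n' + mk k' + 1)%nat).
  set (i1 := Cantor.to_nat (k, 2 * T)). set (i2 := Cantor.to_nat (k, 2 * (T + 1))).
  assert (Hi12 : i1 <> i2) by (intro E; apply Cantor.to_nat_inj in E; injection E; lia).
  pose proof (bb_ge P pick Hp k (2 * T)) as B1. pose proof (bb_ge P pick Hp k (2 * (T + 1))) as B2.
  unfold bb in B1, B2; fold i1 in B1; fold i2 in B2.
  assert (Hy : forall i, aa P pick i = bb P pick k (2 * T) \/ aa P pick i = bb P pick k (2 * (T + 1)) ->
     exists i', cls i' = k' /\ (aa P pick i - n + n' = aa P pick i')%nat).
  { intros i Hi.
    assert (Hx : fk P pick k z (n + (aa P pick i - n))%nat = true).
    { destruct Hi as [Hi|Hi]; rewrite Hi; unfold bb;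
      [replace (n + _)%nat with (bb P pick k (2 * T)) by (unfold bb; fold i1; lia)
      |replace (n + _)%nat with (bb P pick k (2 * (T + 1))) by (unfold bb; fold i2; lia)];
      apply fk_even. }
    assert (HN' : (N <= aa P pick i - n)%nat) by (unfold bb in Hi; fold i1 i2 in Hi; unfold T in *; lia).
    rewrite Hag in Hx by exact HN'.
    apply fk_inv in Hx as [Hx|[i' [h1 h2]]].
    - apply Fg_lt in Hx. unfold bb in Hi; fold i1 i2 in Hi; unfold T in *; lia.
    - exists i'. split; auto. unfold bb in Hi; fold i1 i2 in Hi; unfold T in *; lia. }
  destruct (Hy i1 ltac:(left; reflexivity)) as [i1' [c1 e1]].
  destruct (Hy i2 ltac:(right; reflexivity)) as [i2' [c2 e2]].
  destruct (shift_match P pick Hp n n' i1 i2 i1' i2' Hi12 ltac:(unfold T in *; lia)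
    ltac:(unfold T in *; lia) e1 e2) as [E1 E2].
  assert (k = k') as <-. { rewrite <- c1, <- E1. unfold i1. symmetry; apply cls_to. }
  subst n'. clear E1 c1 c2 e1 e2 Hy.
  assert (Hz : z <> z') by (intro E; apply Hne; subst; reflexivity).
  assert (exists j0, z j0 <> z' j0) as [j0 Hj0].
  { apply not_all_ex_not. intro H. apply Hz. apply functional_extensionality; auto. }
  set (t := Cantor.to_nat (j0, (N + n + 1)%nat)).
  pose proof (Cantor.to_nat_non_decreasing j0 (N + n + 1)%nat). fold t in H.
  pose proof (bb_ge P pick Hp k (2 * t + 1)).
  specialize (Hag (bb P pick k (2 * t + 1) - n)%nat ltac:(lia)).
  replace (n + (bb P pick k (2 * t + 1) - n))%nat with (bb P pick k (2 * t + 1)) in Hag by lia.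
  rewrite !fk_odd in Hag by auto. unfold t in Hag. rewrite jj_to in Hag. auto.
Qed.

Theorem mainTheorem5 (P : nat -> Prop) :
  (forall p, P p -> (1 <= p)%nat) ->
  weakly_mixing (X_P P) ->
  exists S : Sigma -> Prop,
    dense_in (X_P P) S /\ Mycielski S /\
    (forall x, S x -> S (shift x)) /\
    banach_scrambled S.
Proof.
  intros Hpos Hwm. destruct (pick_fun P Hwm) as [pick Hp].
  set (Cs := fun j x => exists z, x = shiftn (snd (Cantor.of_nat j)) (fk P pick (fst (Cantor.of_nat j)) z)).
  exists (fun x => exists j, Cs j x).
  split; [|split; [|split]].
  - split.
    + intros x [j [z ->]]. apply shift_XP, fk_XP; auto.
    + intros x Hx eps He. destruct (small_pow eps He) as [K HK].
      destruct (bit_exists (S K) x) as [c Hc].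
      set (k := Cantor.to_nat (S K, c)).
      assert (Hmk : mk k = S K) by (unfold mk, k; rewrite Cantor.cancel_of_to; reflexivity).
      assert (Hck : ck k = c) by (unfold ck, k; rewrite Cantor.cancel_of_to; reflexivity).
      assert (HFr : forall u, Fraw k u <-> (u < S K)%nat /\ x u = true).
      { intro u. unfold Fraw. rewrite Hmk, Hck. split; intros [a b]; split; auto.
        - rewrite <- Hc; auto. - rewrite Hc; auto. }
      assert (HG : GoodSet P (Fraw k)).
      { intros u v hu hv. apply HFr in hu, hv. apply Hx; tauto. }
      exists (fk P pick k (fun _ => false)). split.
      * exists (Cantor.to_nat (k, 0%nat)). exists (fun _ => false).
        unfold Cs. rewrite Cantor.cancel_of_to. reflexivity.
      * eapply Rlt_trans; [|exact HK]. apply d_agree. intros i Hi.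
        pose proof (fk_low P pick Hp k (fun _ => false) i ltac:(rewrite Hmk; lia)) as Hl.
        destruct (x i) eqn:E; destruct (fk P pick k (fun _ => false) i) eqn:E2; auto; exfalso.
        -- assert (Fg P k i) by (split; auto; apply HFr; split; auto; lia). apply Hl in H. congruence.
        -- destruct (proj1 Hl eq_refl) as [_ h]. apply HFr in h. destruct h; congruence.
  - exists Cs. split; [|intros x; reflexivity]. intro j.
    set (n := snd (Cantor.of_nat j)). set (k := fst (Cantor.of_nat j)).
    exists (fun z => shiftn n (fk P pick k z)),
           (fun x jx => x (bb P pick k (2 * Cantor.to_nat (jx, n) + 1) - n)%nat).
    split; [|split; [|split]].
    + apply cont_of_dep. intro m. exists (n + m)%nat. intros u v Huv i Hi.
      rewrite !shiftn_spec. apply fk_dep; auto. intros; apply Huv; lia.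
    + intro x. unfold Cs. fold n k. reflexivity.
    + intro z. apply functional_extensionality. intro jx. rewrite shiftn_spec.
      pose proof (bb_ge P pick Hp k (2 * Cantor.to_nat (jx, n) + 1)).
      pose proof (Cantor.to_nat_non_decreasing jx n).
      replace (n + (bb P pick k (2 * Cantor.to_nat (jx, n) + 1) - n))%nat
        with (bb P pick k (2 * Cantor.to_nat (jx, n) + 1)) by lia.
      rewrite fk_odd, jj_to by auto. reflexivity.
    + apply cont_of_dep. intro m.
      destruct (bounded_init (fun jx => bb P pick k (2 * Cantor.to_nat (jx, n) + 1) - n)%nat m) as [B HB].
      exists B. intros u v Huv i Hi. apply Huv. apply HB; auto.
  - intros x [j [z ->]].
    exists (Cantor.to_nat (fst (Cantor.of_nat j), S (snd (Cantor.of_nat j)))). exists z.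
    rewrite Cantor.cancel_of_to. reflexivity.
  - split.
    + exists (fk P pick 0 (fun _ => false)), (fk P pick 0 (fun _ => true)).
      split; [|split].
      * exists (Cantor.to_nat (0%nat, 0%nat)), (fun _ => false). unfold Cs. rewrite Cantor.cancel_of_to. reflexivity.
      * exists (Cantor.to_nat (0%nat, 0%nat)), (fun _ => true). unfold Cs. rewrite Cantor.cancel_of_to. reflexivity.
      * intro E. pose proof (f_equal (fun f => f (bb P pick 0 (2 * 0 + 1))) E) as H.
        cbv beta in H. rewrite !fk_odd in H by auto. discriminate.
    + intros x y [j [z ->]] [j' [z' ->]] Hne. split.
      * apply proximal_of_sparse; apply sparse_fk; auto.
      * apply not_asym; auto.
Qed.
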